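(* Let $B\ge 1$ be an integer, $\mathcal{E}>0$, $\epsilon>0$. Let $X=\{\mathbf{i}=(i_0,\dots,i_{B-1})\in\mathbb{R}^B: i_b\ge 1+\epsilon\ \forall b\}$, $Y=\{\mathbf{t}=(t_0,\dots,t_{B-1})\in\mathbb{R}^B: t_b\ge 0\ \forall b\}$, and $S=\{(\mathbf{i},\mathbf{t})\in X\times Y: \sum_{b=0}^{B-1} i_b^2t_b\le\mathcal{E}\}$. Then the optimization problem $$\text{minimize } f(\mathbf{i},\mathbf{t})=\sum_{b=0}^{B-1}4^b\exp\bigl(-2(i_b-1)t_b\bigr)\quad\text{subject to } (\mathbf{i},\mathbf{t})\in S$$ is a biconvex problem: $S$ is a biconvex set on $X\times Y$ and $f$ is a biconvex function on $S$.
   Context: Let $X\subseteq\mathbb{R}^n$, $Y\subseteq\mathbb{R}^m$ be nonempty convex sets. A set $S\subseteq X\times Y$ is biconvex on $X\times Y$ if for every fixed $\mathbf{x}\in X$ the set $S_{\mathbf{x}}=\{\mathbf{y}\in Y:(\mathbf{x},\mathbf{y})\in S\}$ is convex, and for every fixed $\mathbf{y}\in Y$ the set $S_{\mathbf{y}}=\{\mathbf{x}\in X:(\mathbf{x},\mathbf{y})\in S\}$ is convex. A function $f:S\to\mathbb{R}$ is biconvex on $S$ if for every fixed $\mathbf{x}\in X$, $f(\mathbf{x},\cdot)$ is convex on $S_{\mathbf{x}}$, and for every fixed $\mathbf{y}\in Y$, $f(\cdot,\mathbf{y})$ is convex on $S_{\mathbf{y}}$. A problem of minimizing $f$ over $S$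 is biconvex if $S$ is biconvex on $X\times Y$ and $f$ is biconvex on $S$. *)

(* Defs.v *)
From HB Require Import structures.
From mathcomp Require Import all_boot all_order all_algebra.
From mathcomp Require Import all_classical all_reals all_analysis.
Set Implicit Arguments. Unset Strict Implicit. Unset Printing Implicit Defensive.
Import Order.TTheory GRing.Theory Num.Theory.
Local Open Scope ring_scope.
Local Open Scope classical_set_scope.

Section Biconvex.
Variable R : realType.

Definition ccomb (n : nat) (l : R) (x y : 'I_n -> R) : 'I_n -> R :=
  fun i => l * x i + (1 - l) * y i.

Definition convex_set_n (n : nat) (C : set ('I_n -> R)) : Prop :=
  forall x y, C x -> C y -> forall l : R, 0 <= l -> l <= 1 -> C (ccomb l x y).

Definition convex_fun_on (n : nat) (C : set ('I_n -> R)) (g : ('I_n -> R) -> R) : Prop :=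
  forall x y, C x -> C y -> forall l : R, 0 <= l -> l <= 1 ->
    g (ccomb l x y) <= l * g x + (1 - l) * g y.

Definition sec_x (n m : nat) (Y : set ('I_m -> R)) (S : set (('I_n -> R) * ('I_m -> R)))
  (x : 'I_n -> R) : set ('I_m -> R) := [set y | Y y /\ S (x, y)].
Definition sec_y (n m : nat) (X : set ('I_n -> R)) (S : set (('I_n -> R) * ('I_m -> R)))
  (y : 'I_m -> R) : set ('I_n -> R) := [set x | X x /\ S (x, y)].

Definition biconvex_set (n m : nat) (X : set ('I_n -> R)) (Y : set ('I_m -> R))
  (S : set (('I_n -> R) * ('I_m -> R))) : Prop :=
  (forall p, S p -> X p.1 /\ Y p.2) /\
  (forall x, X x -> convex_set_n (sec_x Y S x)) /\
  (forall y, Y y -> convex_set_n (sec_y X S y)).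

Definition biconvex_fun (n m : nat) (X : set ('I_n -> R)) (Y : set ('I_m -> R))
  (S : set (('I_n -> R) * ('I_m -> R))) (f : ('I_n -> R) -> ('I_m -> R) -> R) : Prop :=
  (forall x, X x -> convex_fun_on (sec_x Y S x) (f x)) /\
  (forall y, Y y -> convex_fun_on (sec_y X S y) (fun x => f x y)).

Definition biconvex_problem (n m : nat) (X : set ('I_n -> R)) (Y : set ('I_m -> R))
  (S : set (('I_n -> R) * ('I_m -> R))) (f : ('I_n -> R) -> ('I_m -> R) -> R) : Prop :=
  (X !=set0 /\ convex_set_n X) /\ (Y !=set0 /\ convex_set_n Y) /\
  biconvex_set X Y S /\ biconvex_fun X Y S f.

End Biconvex.

(* Main.v *)
Require Import Defs.
From HB Require Import structures.
From mathcomp Require Import all_boot all_order all_algebra.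
From mathcomp Require Import all_classical all_reals all_analysis.
From mathcomp Require Import ring lra.
Import Order.TTheory GRing.Theory Num.Theory.
Local Open Scope ring_scope.
Local Open Scope classical_set_scope.

Lemma eqle (R : realType) (x y : R) : x = y -> x <= y.
Proof. by move->. Qed.

Lemma expR_conv (R : realType) (l a b : R) : 0 <= l -> l <= 1 ->
  expR (l * a + (1 - l) * b) <= l * expR a + (1 - l) * expR b.
Proof.
move=> l0 l1.
have := @convex_expR R (Itv01 l0 l1) a b.
by rewrite /conv /=.
Qed.

Lemma term_conv (R : realType) (l c a1 a2 u : R) : 0 <= l -> l <= 1 -> 0 <= c ->
  u = l * a1 + (1 - l) * a2 ->
  c * expR u <= l * (c * expR a1) + (1 - l) * (c * expR a2).
Proof.
move=> l0 l1 c0 ->.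
apply: (le_trans (ler_wpM2l c0 (@expR_conv R l a1 a2 l0 l1))).
by apply: eqle; ring.
Qed.

Lemma sum_conv (R : realType) (B : nat) (l : R) (F G H : 'I_B -> R) :
  (forall b, F b <= l * G b + (1 - l) * H b) ->
  \sum_(b < B) F b <= l * \sum_(b < B) G b + (1 - l) * \sum_(b < B) H b.
Proof.
move=> h; rewrite !mulr_sumr -big_split /=; apply: ler_sum => b _; exact: h.
Qed.

Lemma sq_conv (R : realType) (l x y t : R) : 0 <= l -> l <= 1 -> 0 <= t ->
  (l * x + (1 - l) * y) ^+ 2 * t <= l * (x ^+ 2 * t) + (1 - l) * (y ^+ 2 * t).
Proof.
move=> l0 l1 t0.
have h : l * (x ^+ 2 * t) + (1 - l) * (y ^+ 2 * t) - (l * x + (1 - l) * y) ^+ 2 * t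
  = l * (1 - l) * (x - y) ^+ 2 * t by ring.
rewrite -subr_ge0 h; apply: mulr_ge0 => //; apply: mulr_ge0; last exact: sqr_ge0.
by apply: mulr_ge0 => //; rewrite subr_ge0.
Qed.

Theorem theorem1 (R : realType) (B : nat) (E eps : R) :
  (1 <= B)%N -> 0 < E -> 0 < eps ->
  biconvex_problem
    [set i : 'I_B -> R | forall b, 1 + eps <= i b]
    [set t : 'I_B -> R | forall b, 0 <= t b]
    [set p : ('I_B -> R) * ('I_B -> R) |
       (forall b, 1 + eps <= p.1 b) /\ (forall b, 0 <= p.2 b) /\
       \sum_(b < B) (p.1 b) ^+ 2 * p.2 b <= E]
    (fun i t => \sum_(b < B) (4 : R) ^+ b * expR (- 2 * (i b - 1) * t b)).
Proof.
move=> _ E0 eps0.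
have cX : forall c : R, convex_set_n [set i : 'I_B -> R | forall b, c <= i b].
  move=> c x y hx hy l l0 l1 b; rewrite /ccomb.
  have l1' : 0 <= 1 - l by rewrite subr_ge0.
  have := ler_wpM2l l0 (hx b); have := ler_wpM2l l1' (hy b); lra.
split; [split|split; [split|split; [split|]]].
- by exists (fun _ => 1 + eps) => b.
- exact: cX.
- by exists (fun _ => 0) => b.
- exact: cX.
- by move=> p [h1 [h2 _]].
- split.
  + move=> x hx t1 t2 [h1 [_ [_ s1]]] [h2 [_ [_ s2]]] l l0 l1.
    split; first exact: cX.
    split => //; split; first exact: cX.
    apply: le_trans (_ : l * E + (1 - l) * E <= E); last lra.
    apply: le_trans; first apply: (@sum_conv R B l _
       (fun b => x b ^+ 2 * t1 b) (fun b => x b ^+ 2 * t2 b)).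
      by move=> b; rewrite /ccomb /=; apply: eqle; ring.
    have l1' : 0 <= 1 - l by rewrite subr_ge0.
    by apply: lerD; apply: ler_wpM2l.
  + move=> t ht x1 x2 [h1 [_ [_ s1]]] [h2 [_ [_ s2]]] l l0 l1.
    split; first exact: cX.
    split; first exact: cX.
    split => //.
    apply: le_trans (_ : l * E + (1 - l) * E <= E); last lra.
    apply: le_trans; first apply: (@sum_conv R B l _
       (fun b => x1 b ^+ 2 * t b) (fun b => x2 b ^+ 2 * t b)).
      by move=> b; rewrite /ccomb /=; apply: sq_conv.
    have l1' : 0 <= 1 - l by rewrite subr_ge0.
    by apply: lerD; apply: ler_wpM2l.
- split.
  + move=> x hx t1 t2 _ _ l l0 l1; apply: sum_conv => b.
    apply: term_conv => //.
    by rewrite /ccomb; ring.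
  + move=> t ht x1 x2 _ _ l l0 l1; apply: sum_conv => b.
    apply: term_conv => //.
    by rewrite /ccomb; ring.
Qed.
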